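(* Let $A$ be an Archimedean semiprime $f$-algebra and $a\in A$. Then $a^2\le\mu|a|$ for some $\mu\in(0,\infty)$ if and only if for every $x\in A$ there is $\lambda\in(0,\infty)$ with $|ax|\le\lambda|x|$ (i.e., $ax\in A(x)$ for all $x\in A$).
   Context: An $f$-algebra is a real associative algebra that is a vector lattice with $A_+A_+\subseteq A_+$ and such that $a\wedge b=0$ implies $ac\wedge b=ca\wedge b=0$ for all $c\in A_+$; it is semiprime if $0$ is its only nilpotent element. For $x\in A$, $A(x)=\{y\in A: |y|\le\lambda|x|\text{ for some }\lambda\in(0,\infty)\}$. Elements $a$ with $a^2\in A(a)$ are called bounded. *)

(* Defs.v *)
From HB Require Import structures.
From mathcomp Require Import all_boot all_order all_algebra.
From mathcomp Require Import reals.
Set Implicit Arguments. Unset Strict Implicit. Unset Printing Implicit Defensive.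
Import Order.TTheory GRing.Theory Num.Theory.
Local Open Scope ring_scope.

Section FAlgebra.
Variables (R : realType) (V : lmodType R).
Variables (mul : V -> V -> V) (le : V -> V -> Prop) (join meet : V -> V -> V).

Definition is_real_algebra : Prop :=
  [/\ forall x y z, mul x (mul y z) = mul (mul x y) z,
      forall x y z, mul (x + y) z = mul x z + mul y z,
      forall x y z, mul x (y + z) = mul x y + mul x z,
      forall (c : R) x y, mul (c *: x) y = c *: mul x y
    & forall (c : R) x y, mul x (c *: y) = c *: mul x y].

Definition is_ordered_vspace : Prop :=
  [/\ forall x, le x x,
      forall x y, le x y -> le y x -> x = y,
      forall x y z, le x y -> le y z -> le x z,
      forall x y z, le x y -> le (x + z) (y + z)
    & forall (c : R) x y, 0 <= c -> le x y -> le (c *: x) (c *: y)].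

Definition is_lattice_ops : Prop :=
  (forall x y, le x (join x y) /\ le y (join x y)) /\
  (forall x y z, le x z -> le y z -> le (join x y) z) /\
  (forall x y, le (meet x y) x /\ le (meet x y) y) /\
  (forall x y z, le z x -> le z y -> le z (meet x y)).

Definition is_vector_lattice : Prop := is_ordered_vspace /\ is_lattice_ops.

Definition positive (x : V) : Prop := le 0 x.

Definition absv (x : V) : V := join x (- x).

Definition is_f_algebra : Prop :=
  [/\ is_real_algebra, is_vector_lattice,
      forall a b, positive a -> positive b -> positive (mul a b)
    & forall a b c, meet a b = 0 -> positive c ->
        meet (mul a c) b = 0 /\ meet (mul c a) b = 0].

Definition archimedean_vl : Prop :=
  forall x y, positive x -> (forall n : nat, le (x *+ n) y) -> x = 0.

(* fpow x n = x^(n+1) *)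
Definition fpow (x : V) (n : nat) : V := iter n (mul x) x.

Definition semiprime : Prop :=
  forall x, (exists n : nat, fpow x n = 0) -> x = 0.

End FAlgebra.

(* Main.v *)
Require Import Defs.
From HB Require Import structures.
From mathcomp Require Import all_boot all_order all_algebra.
From mathcomp Require Import reals.
Import Order.TTheory GRing.Theory Num.Theory.
Local Open Scope ring_scope.

Theorem lemma5 (R : realType) (V : lmodType R) (mul : V -> V -> V)
  (le : V -> V -> Prop) (join meet : V -> V -> V) :
  is_f_algebra mul le join meet ->
  archimedean_vl le ->
  semiprime mul ->
  forall a : V,
    (exists mu : R, 0 < mu /\ le (mul a a) (mu *: absv join a)) <->
    (forall x : V, exists lambda : R,
        0 < lambda /\ le (absv join (mul a x)) (lambda *: absv join x)).
Proof.
move=> [[massoc mDl mDr mZl mZr] [[lerefl leanti letrans leadd lescale]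
  [joinub [joinlub [meetlb meetglb]]]] mpos fdisj] _ sp a.
rewrite /positive in mpos fdisj.
have subP : forall x y, le x y <-> le 0 (y - x).
  move=> x y; split=> H.
    by have := leadd _ _ (- x) H; rewrite subrr.
  by have := leadd _ _ x H; rewrite add0r subrK.
have sub1 : forall x y, le x y -> le 0 (y - x) by move=> x y H; apply/(subP x y).
have sub2 : forall x y, le 0 (y - x) -> le x y by move=> x y H; apply/(subP x y).
have addle : forall x y z w, le x y -> le z w -> le (x + z) (y + w).
  move=> x y z w H1 H2; apply: (letrans _ (y + z)); first exact: leadd.
  by rewrite (addrC y z) (addrC y w); apply: leadd.
have oppP : forall x y, le x y -> le (- y) (- x).
  by move=> x y /sub1 H; apply: sub2; rewrite opprK addrC.
have mul0l : forall z, mul 0 z = 0.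
  by move=> z; apply: (addrI (mul 0 z)); rewrite addr0 -mDl addr0.
have mul0r : forall z, mul z 0 = 0.
  by move=> z; apply: (addrI (mul z 0)); rewrite addr0 -mDr addr0.
have mulNl : forall y z, mul (- y) z = - mul y z.
  by move=> y z; rewrite -scaleN1r mZl scaleN1r.
have mulNr : forall y z, mul z (- y) = - mul z y.
  by move=> y z; rewrite -scaleN1r mZr scaleN1r.
have mulBl : forall x y z, mul (x - y) z = mul x z - mul y z.
  by move=> x y z; rewrite mDl mulNl.
have mulBr : forall x y z, mul z (x - y) = mul z x - mul z y.
  by move=> x y z; rewrite mDr mulNr.
have monl : forall c x y, le 0 c -> le x y -> le (mul c x) (mul c y).
  by move=> c x y Hc /sub1 H; apply: sub2; rewrite -mulBr; apply: mpos.
have monr : forall c x y, le 0 c -> le x y -> le (mul x c) (mul y c).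
  by move=> c x y Hc /sub1 H; apply: sub2; rewrite -mulBl; apply: mpos.
have meetC : forall x y, meet x y = meet y x.
  move=> x y; apply: leanti; apply: meetglb;
  by [case: (meetlb x y) | case: (meetlb y x)].
have meetxx : forall x, meet x x = x.
  move=> x; apply: leanti; first by case: (meetlb x x).
  by apply: meetglb; apply: lerefl.
have DZ : forall u w, meet u w = 0 -> le 0 u -> le 0 w -> mul u w = 0.
  move=> u w H Hu Hw.
  have [H1 _] := fdisj _ _ _ H Hw.
  rewrite meetC in H1.
  have [_ H2] := fdisj _ _ _ H1 Hu.
  by rewrite meetxx in H2.
have PD : forall t, le 0 (join t 0) /\ le 0 (join t 0 - t) /\
                    meet (join t 0) (join t 0 - t) = 0.
  move=> t; set u := join t 0; set w := u - t.
  have Hu : le 0 u by case: (joinub t 0).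
  have Hw : le 0 w by apply: sub1; case: (joinub t 0).
  split=> //; split=> //.
  set m := meet u w.
  have [Hmu Hmw] := meetlb u w.
  have Hm0 : le 0 m by apply: meetglb.
  apply: leanti => //.
  have H1 : le u (u - m).
    apply: joinlub; last exact: sub1.
    apply: sub2; move/sub1: Hmw.
    by rewrite /w; congr le; rewrite addrAC.
  move/sub1: H1; rewrite addrAC subrr add0r => H1.
  by apply: sub2; rewrite add0r.
have K : forall b t, le 0 b -> le (mul b t) 0 ->
    (forall u, le 0 u -> mul u b = 0 -> le (mul u t) 0) -> le t 0.
  move=> b t Hb Hbt Hu'.
  have [Htu _] := joinub t 0.
  move: (PD t) Htu; set u := join t 0; move=> [Hu [Hw Huw]] Htu.
  clearbody u; set w := u - t in Hw Huw.
  have Et : t = u - w by rewrite /w opprB addrC subrK.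
  clearbody w.
  have D1 : meet (mul b u) (mul b w) = 0.
    have [_ H1] := fdisj _ _ _ Huw Hb.
    rewrite meetC in H1. have [_ H2] := fdisj _ _ _ H1 Hb.
    by rewrite meetC.
  have Hbu : le (mul b u) (mul b w).
    apply: sub2; move/sub1: Hbt; rewrite Et mulBr.
    by rewrite sub0r opprB.
  have Ebu : mul b u = 0.
    rewrite -D1; apply: leanti; last by case: (meetlb (mul b u) (mul b w)).
    by apply: meetglb => //; apply: lerefl.
  have Eub : mul u b = 0.
    apply: sp; exists 1%N; rewrite /fpow /=.
    by rewrite -massoc (massoc b u b) Ebu mul0l mul0r.
  have Huu : mul u u = 0.
    apply: leanti; last exact: mpos.
    have := Hu' u Hu Eub.
    by rewrite Et mulBr (DZ u w Huw Hu Hw) subr0.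
  have Eu : u = 0 by apply: sp; exists 1%N.
  by rewrite -Eu.
have fin : forall x y, le (x - y) 0 -> le x y.
  by move=> x y /sub1; rewrite sub0r opprB => /sub2.
have fin' : forall x y, le x y -> le (x - y) 0.
  by move=> x y H; apply: sub2; rewrite sub0r opprB; apply: sub1.
split; last first.
  move=> H; have [l [Hl Hle]] := H a; exists l; split => //.
  apply: (letrans _ (absv join (mul a a))) => //.
  by case: (joinub (mul a a) (- mul a a)).
move=> [mu [Hmu Ha]].
have Hmu0 : 0 <= mu := ltW Hmu.
have G1 : forall p q, le 0 p -> le 0 q -> mul p q = 0 ->
    le (mul p p + mul q q) (mu *: (p + q)) -> le (mul p p) (mu *: p).
  move=> p q Hp Hq Epq H; apply: fin; apply: (K p) => //.
  - have := monl p _ _ Hp H.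
    rewrite mDr (massoc p q q) Epq mul0l addr0 mZr mDr Epq addr0 => H2.
    by rewrite mulBr mZr; apply: fin'.
  - move=> u Hu Eup.
    by rewrite mulBr mZr massoc Eup mul0l scaler0 subrr; apply: lerefl.
have G2 : forall b, le 0 b -> le (mul b b) (mu *: b) ->
    forall x, le 0 x -> le (mul b x) (mu *: x).
  move=> b Hb Hbb x Hx; apply: fin; apply: (K b) => //.
  - have := monr x _ _ Hx Hbb; rewrite mZl => H2.
    by rewrite mulBr mZr massoc; apply: fin'.
  - move=> u Hu Eub.
    rewrite mulBr mZr massoc Eub mul0l sub0r -oppr0.
    apply: oppP; rewrite -(@scaler0 _ V mu); apply: lescale => //.
    exact: mpos.
have [Htu _] := joinub a 0.
move: (PD a) Htu; set p := join a 0; move=> [Hp [Hq Hpq]] Htu.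
clearbody p; set q := p - a in Hq Hpq.
have Ea : a = p - q by rewrite /q opprB addrC subrK.
clearbody q.
have Epq : mul p q = 0 := DZ p q Hpq Hp Hq.
have Eqp : mul q p = 0.
  by apply: DZ => //; rewrite meetC.
have Eaa : mul a a = mul p p + mul q q.
  by rewrite Ea mulBl !mulBr Epq Eqp subr0 sub0r opprK.
have Habs : le (absv join a) (p + q).
  apply: joinlub; apply: sub2.
  - have -> : p + q - a = q + q by rewrite Ea opprB addrC addrA subrK.
    by rewrite -(addr0 0); apply: addle.
  - have -> : p + q - - a = p + p by rewrite Ea opprK addrACA subrr addr0.
    by rewrite -(addr0 0); apply: addle.
have H : le (mul p p + mul q q) (mu *: (p + q)).
  by rewrite -Eaa; apply: (letrans _ _ _ Ha); apply: lescale.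
have Pp := G2 p Hp (G1 p q Hp Hq Epq H).
have Pq : forall y, le 0 y -> le (mul q y) (mu *: y).
  apply: G2 => //; apply: (G1 q p) => //.
  by rewrite addrC (addrC q p).
have Ay1 : forall y, le 0 y -> le (mul a y) (mu *: y).
  move=> y Hy; apply: (letrans _ (mul p y)); last exact: Pp.
  rewrite Ea mulBl; apply: sub2.
  by rewrite opprB addrC subrK; apply: mpos.
have Ay2 : forall y, le 0 y -> le (- mul a y) (mu *: y).
  move=> y Hy; apply: (letrans _ (mul q y)); last exact: Pq.
  rewrite Ea mulBl opprB; apply: sub2.
  by rewrite opprB addrC subrK; apply: mpos.
move=> x; exists (mu + mu + mu); split; first by rewrite !addr_gt0.
have [HX1 HX2] := joinub x (- x).
rewrite /absv; move: HX1 HX2; set X := join x (- x) => HX1 HX2.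
clearbody X.
have H2X : le 0 (X + X).
  by have := addle _ _ _ _ HX1 HX2; rewrite subrr.
have HX0 : le 0 X.
  have h2 : (0 : R) <= 2^-1 by rewrite invr_ge0.
  have := lescale _ _ _ h2 H2X.
  rewrite scaler0 -mulr2n -scaler_nat scalerA mulVf ?scale1r //.
  by rewrite pnatr_eq0.
have HY : le 0 (X - x) by apply: sub1.
have Ex : x = X - (X - x) by rewrite opprB addrC subrK.
have HYX : le (mu *: (X - x)) (mu *: (X + X)).
  by apply: lescale => //; apply: addle => //; apply: lerefl.
have Eq3 : mu *: X + mu *: (X + X) = (mu + mu + mu) *: X.
  by rewrite !scalerDl scalerDr addrA.
apply: joinlub; rewrite -Eq3.
- rewrite Ex mulBr; apply: (letrans _ (mu *: X + mu *: (X - x))) => //.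
  by apply: addle; [apply: Ay1 | apply: Ay2].
  by apply: addle => //; apply: lerefl.
- rewrite Ex mulBr opprB addrC; apply: (letrans _ (mu *: X + mu *: (X - x))) => //.
  by apply: addle; [apply: Ay2 | apply: Ay1].
  by apply: addle => //; apply: lerefl.
Qed.
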